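(* Let $H$ be obtained from a graph $G$ on vertices $v_1,\dots,v_k$ by expanding each $v_i$ by the graph $M_i=(V_i,E_i)$. Let $\Omega$ be a potential maximal clique of $H$, and suppose some $V_i$ intersects $\Omega$ but is not contained in $\Omega$. Then $\Omega\cap V_i$ is a potential maximal clique of $M_i$ and $\Omega\setminus V_i=N_H(V_i)$.
   Context: Expansion: given a graph $G$ on vertices $v_1,\dots,v_k$ and pairwise disjoint graphs $M_i=(V_i,E_i)$, the graph $H$ obtained by expanding each $v_i$ by $M_i$ has vertex set $V_1\cup\dots\cup V_k$ and edge set $E_1\cup\dots\cup E_k\cup\{ab \mid a\in V_i, b\in V_j, v_iv_j\in E(G)\}$. $N_H(X)$ denotes the set of vertices outside $X$ adjacent in $H$ to some vertex of $X$. A graph is chordal if every cycle of length at least 4 has a chord; a minimal triangulation of a graph $F$ is a chordal supergraph on the same vertex set such that no proper subset of its edge set containing $E(F)$ gives a chordal graph. A potential maximal clique of $F$ is a vertex set that is a maximal clique of some minimal triangulation of $F$. *)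

(* Defs.v *)
(* Finite simple graphs on a subset A of a finType T,
   with edges represented as 2-element subsets of A. *)
From mathcomp Require Import all_boot.
Set Implicit Arguments. Unset Strict Implicit. Unset Printing Implicit Defensive.

Section Graphs.
Variable T : finType.

Definition wf_graph (A : {set T}) (E : {set {set T}}) : Prop :=
  forall e, e \in E -> #|e| = 2 /\ e \subset A.

Definition adj (E : {set {set T}}) : rel T :=
  fun x y => (x != y) && ([set x; y] \in E).

Definition is_clique (A : {set T}) (E : {set {set T}}) (K : {set T}) : Prop :=
  K \subset A /\ (forall x y, x \in K -> y \in K -> x != y -> [set x; y] \in E).

Definition maximal_clique (A : {set T}) (E : {set {set T}}) (K : {set T}) : Prop :=
  is_clique A E K /\ (forall K' : {set T}, is_clique A E K' -> K \subset K' -> K' = K).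

Definition chordal (A : {set T}) (E : {set {set T}}) : Prop :=
  forall s : seq T, uniq s -> 4 <= size s -> {subset s <= A} ->
    cycle (adj E) s ->
    exists x y, [/\ x \in s, y \in s, adj E x y, y != next s x & x != next s y].

Definition minimal_triangulation (A : {set T}) (E F : {set {set T}}) : Prop :=
  [/\ wf_graph A F, E \subset F, chordal A F &
      forall F' : {set {set T}}, E \subset F' -> F' \subset F -> chordal A F' -> F' = F].

Definition potential_maximal_clique (A : {set T}) (E : {set {set T}})
  (Om : {set T}) : Prop :=
  exists F, minimal_triangulation A E F /\ maximal_clique A F Om.

Definition nbh (A : {set T}) (E : {set {set T}}) (X : {set T}) : {set T} :=
  [set y in A :\: X | [exists x in X, adj E x y]].

(* Expansion of G = ('I_k, EG) by graphs M_i = (V i, EM i). *)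
Definition expansion_vertices (k : nat) (V : 'I_k -> {set T}) : {set T} :=
  \bigcup_(i < k) V i.

Definition expansion_edges (k : nat) (EG : {set {set 'I_k}})
  (V : 'I_k -> {set T}) (EM : 'I_k -> {set {set T}}) : {set {set T}} :=
  (\bigcup_(i < k) EM i) :|:
  [set e : {set T} | [exists a : T, exists b : T, exists i : 'I_k, exists j : 'I_k,
        [&& e == [set a; b], a \in V i, b \in V j & [set i; j] \in EG]]].

End Graphs.

(* Main.v *)
Require Import Defs.
From mathcomp Require Import all_boot.
From Stdlib Require Import Classical Lia.
From mathcomp Require Import zify.
Set Implicit Arguments. Unset Strict Implicit. Unset Printing Implicit Defensive.

Section Basics.
Variable T : finType.
Implicit Types (E F : {set {set T}}) (s : seq T).

Definition hc E s := exists x y, [/\ x \in s, y \in s, adj E x y, y != next s x & x != next s y].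

Lemma adj_sym E x y : adj E x y = adj E y x.
Proof. by rewrite /adj /= eq_sym setUC. Qed.

Lemma adj_sub E F x y : E \subset F -> adj E x y -> adj F x y.
Proof. by rewrite /adj /= => sEF /andP[xy /(subsetP sEF) h]; rewrite xy h. Qed.

Lemma adj_neq E x y : adj E x y -> x != y.
Proof. by case/andP. Qed.

Lemma cycle_mid (e : rel T) s1 a b s2 : cycle e (s1 ++ a :: b :: s2) -> e a b.
Proof.
case: s1 => [|y s1] /=; first by case/andP.
by rewrite rcons_cat cat_path /= => /and4P[].
Qed.

Lemma cycle_last (e : rel T) x s : cycle e (x :: s) -> e (last x s) x.
Proof. by rewrite /= rcons_path => /andP[]. Qed.

Lemma next_mid s1 a b s2 : uniq (s1 ++ a :: b :: s2) -> next (s1 ++ a :: b :: s2) a = b.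
Proof.
move=> U; have := cycle_next U => /cycle_mid /eqP; done.
Qed.

Lemma next_last x s : uniq (x :: s) -> next (x :: s) (last x s) = x.
Proof.
move=> U; have := cycle_next U => /cycle_last /eqP; done.
Qed.

Lemma hc_rot E n s : uniq s -> hc E (rot n s) -> hc E s.
Proof.
move=> U [x [y [xs ys a n1 n2]]]; exists x, y.
by rewrite (mem_rot n) in xs; rewrite (mem_rot n) in ys; rewrite !(next_rot n U) in n1 n2.
Qed.

Lemma split2 s x y : x \in s -> y \in s -> x != y ->
  exists s1 s2 s3, s = s1 ++ x :: s2 ++ y :: s3 \/ s = s1 ++ y :: s2 ++ x :: s3.
Proof.
move=> /splitPr[p1 p2]; rewrite mem_cat inE => /orP[yp1|/orP[/eqP->|yp2]].
- case/splitPr: yp1 => q1 q2 _; exists q1, q2, p2; right; by rewrite -catA.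
- by rewrite eqxx.
- case/splitPr: yp2 => q1 q2 _; exists p1, q1, q2; by left.
Qed.

Definition induced E s := forall s1 x s2 y s3, s = s1 ++ x :: s2 ++ y :: s3 ->
  s2 != [::] -> ~~ adj E x y.

Lemma induced_pre E s r : induced E (s ++ r) -> induced E s.
Proof.
move=> I s1 x s2 y s3 Es; apply: (I s1 x s2 y (s3 ++ r)).
by rewrite Es -!catA /= -catA.
Qed.

Lemma induced_suf E s r : induced E (r ++ s) -> induced E s.
Proof.
move=> I s1 x s2 y s3 Es; apply: (I (r ++ s1) x s2 y s3).
by rewrite Es -!catA.
Qed.

Lemma fan A F v : chordal A F -> forall n c P, size P <= n ->
  uniq (v :: c :: P) -> {subset v :: c :: P <= A} -> path (adj F) c P ->
  induced F (c :: P) -> adj F v c -> adj F v (last c P) ->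
  forall w, w \in c :: P -> adj F v w.
Proof.
move=> ch; elim=> [|n IH] c P.
  by rewrite leqn0 => /nilP-> _ _ _ _ vc _ w; rewrite inE => /eqP->.
move=> sP U sA pP ind vc vl.
case: P sP U sA pP ind vl => [|d [|e P]] sP U sA pP ind vl w.
- by rewrite inE => /eqP->.
- by rewrite !inE => /orP[]/eqP->.
have sz2 : 2 <= size (d :: e :: P) by [].
move: (d :: e :: P) sP U sA pP ind vl sz2 => P0 sP U sA pP ind vl sz2.
have cyc : cycle (adj F) (v :: c :: P0).
  have h : path (adj F) v (rcons (c :: P0) v).
    by rewrite rcons_path /= vc pP adj_sym vl.
  exact: h.
have [x [y [xt yt xy nx ny]]] := ch _ U (sz2 : 4 <= size (v :: c :: P0)) sA cyc.
have key : forall y, y \in c :: P0 -> adj F v y -> y != c -> y != last c P0 ->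
    exists s1 s2, c :: P0 = c :: s1 ++ y :: s2 /\ s2 != [::].
  move=> y0 y0P vy0 y0c y0l.
  have y0P' : y0 \in P0 by move: y0P; rewrite inE (negbTE y0c).
  move: y0l; case/splitPr: y0P' => s1 s2; rewrite last_cat /= => hl.
  exists s1, s2; split => //.
  by case: s2 hl => //=; rewrite eqxx.
have [w0 [s1 [s2 [E1 s2n vw0]]]] : exists w0 s1 s2, [/\ c :: P0 = c :: s1 ++ w0 :: s2, s2 != [::] & adj F v w0].
  have U' := U; rewrite /= in U'; case/andP: U' => vnin Uc.
  have hn1 : next (v :: c :: P0) v = c by rewrite (next_mid (s1:=[::])).
  have hn2 : next (v :: c :: P0) (last c P0) = v by rewrite (next_last U).
  move: xt yt; rewrite inE => /orP[/eqP xv|xP]; rewrite inE => /orP[/eqP yv|yP].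
  - by move: (adj_neq xy); rewrite xv yv eqxx.
  - rewrite xv in xy nx ny; rewrite hn1 in nx.
    have yl : y != last c P0 by apply: contra ny => /eqP->; rewrite hn2.
    have [s1 [s2 [E1 s2n]]] := key y yP xy nx yl.
    by exists y, s1, s2.
  - rewrite yv in xy nx ny; rewrite hn1 in ny.
    have xl : x != last c P0 by apply: contra nx => /eqP->; rewrite hn2.
    rewrite adj_sym in xy.
    have [s1 [s2 [E1 s2n]]] := key x xP xy ny xl.
    by exists x, s1, s2.
  - exfalso.
    have [s1 [s2 [s3 [E1|E1]]]] := split2 xP yP (adj_neq xy).
    + case: s2 E1 => [|h s2] E1.
        move: nx; rewrite E1 -cat_cons (next_mid (s1:=v :: s1)) ?eqxx //.
        by move: U; rewrite E1 => U'; exact: U'.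
      by move: (ind _ _ _ _ _ E1 isT); rewrite xy.
    + case: s2 E1 => [|h s2] E1.
        move: ny; rewrite E1 -cat_cons (next_mid (s1:=v :: s1)) ?eqxx //.
        by move: U; rewrite E1 => U'; exact: U'.
      by move: (ind _ _ _ _ _ E1 isT); rewrite adj_sym xy.
have Es : c :: P0 = (c :: s1 ++ [:: w0]) ++ s2 by rewrite E1 /= -catA.
have Es2 : v :: c :: P0 = (v :: c :: s1) ++ (w0 :: s2) by rewrite E1.
case: s2 s2n Es Es2 E1 => // h s2 _ Es Es2 E1.
have sz : size P0 = size s1 + (size s2).+2.
  by move: E1 => [->]; rewrite size_cat.
have l0 : last c P0 = last h s2 by move: E1 => [->]; rewrite last_cat.
move: w; rewrite Es => w; rewrite mem_cat => /orP[wP|wP].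
- have sub1 : subseq (v :: c :: s1 ++ [:: w0]) (v :: c :: P0).
    rewrite Es; exact: (prefix_subseq (v :: c :: s1 ++ [:: w0]) (h :: s2)).
  apply: (IH c (s1 ++ [:: w0])) => //.
  + by rewrite size_cat /= addn1; move: sP; rewrite sz => hh; clear -hh; lia.
  + exact: subseq_uniq sub1 U.
  + by move=> z /(mem_subseq sub1) /sA.
  + by move: pP; rewrite (_ : P0 = (s1 ++ [:: w0]) ++ h :: s2) ?cat_path; [case/andP|move: E1 => [->]; rewrite -catA].
  + by apply: (induced_pre (r := h :: s2)); rewrite -Es.
  + by rewrite last_cat.
- have sub2 : subseq (v :: w0 :: h :: s2) (v :: c :: P0).
    rewrite Es2 /= eqxx; exact: (suffix_subseq (c :: s1) (w0 :: h :: s2)).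
  apply: (IH w0 (h :: s2)) => //.
  + by move: sP; rewrite sz /= => hh; clear -hh; lia.
  + exact: subseq_uniq sub2 U.
  + by move=> z /(mem_subseq sub2) /sA.
  + by move: pP; move: E1 => [->]; rewrite cat_path => /andP[_] /= /andP[].
  + by apply: (induced_suf (r := c :: s1)); rewrite /= -E1.
  + by rewrite /= -l0.
  + by rewrite inE wP orbT.
Qed.


Lemma rot3 s z : z \in s -> 3 <= size s -> exists i c d t, rot i s = z :: c :: d :: t.
Proof.
case/rot_to => i t E sz; exists i.
have : size (rot i s) = size s by rewrite size_rot.
rewrite E; case: t E => [|c [|d t]] E //= hs; first by move: sz; rewrite -hs.
  by move: sz; rewrite -hs.
by exists c, d, t.
Qed.

Lemma path_closed (f : T -> T) (P : pred T) a p : path (frel f) a p -> P a ->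
  (forall b, b \in a :: p -> P b -> P (f b)) -> all P p.
Proof.
elim: p a => [|b p IH] a //= /andP[/eqP fab pb] Pa cl.
have Pb : P b by rewrite -fab; apply: cl => //; rewrite inE eqxx.
rewrite Pb; apply: (IH b pb Pb) => b' hb' Pb'; apply: cl => //; by rewrite inE hb' orbT.
Qed.

Lemma exists_next_out (V : {set T}) s x y : uniq s -> x \in s -> x \in V -> y \in s -> y \notin V ->
  exists z, [/\ z \in s, z \in V & next s z \notin V].
Proof.
move=> U xs xV ys yV.
case: (boolP (has (fun z => (z \in V) && (next s z \notin V)) s)).
  by case/hasP => z zs /andP[zV nz]; exists z.
move/hasPn => H; exfalso.
case/rot_to: xs => i t E.
have Ur : uniq (rot i s) by rewrite rot_uniq.
have := cycle_next Ur; rewrite E /= rcons_path => /andP[pt _].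
have : all (mem V) t.
  apply: (path_closed pt) => // b hb bV.
  have bs : b \in s by rewrite -(mem_rot i) E.
  rewrite -E next_rot //.
  apply/negPn; apply: contra (H b bs) => nb; rewrite nb andbT; exact: bV.
move/allP => al.
have : y \in x :: t by rewrite -E mem_rot.
rewrite inE => /orP[/eqP yx|yt]; first by move: yV; rewrite yx xV.
by move: (al y yt); rewrite /= (negbTE yV).
Qed.

Lemma glue (A : {set T}) (G : {set {set T}}) (V N : {set T}) :
  (forall x y, x \in V -> y \notin V -> adj G x y -> y \in N) ->
  (forall x y, x \in V -> y \in N -> adj G x y) ->
  (forall x y, x \in N -> y \in N -> x != y -> adj G x y) ->
  (forall s, uniq s -> 4 <= size s -> {subset s <= A} -> cycle (adj G) s ->
     {subset s <= V} -> hc G s) ->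
  (forall s, uniq s -> 4 <= size s -> {subset s <= A} -> cycle (adj G) s ->
     (forall x, x \in s -> x \notin V) -> hc G s) ->
  chordal A G.
Proof.
move=> ha hb hc' hd he s U sz sA cyc.
case: (boolP (all (mem V) s)) => [/allP al|]; first by apply: hd => // x /al.
case: (boolP (all (fun x => x \notin V) s)) => [/allP al _|]; first by apply: he => // x /al.
case/allPn => x xs /negPn xV; case/allPn => y ys /= yV.
have [z [zs zV nz]] := exists_next_out U xs xV ys yV.
have [i [q [c [t E]]]] := rot3 zs (leq_trans (isT : 3 <= 4) sz).
apply: (hc_rot (n:=i)) => //.
rewrite E.
have Ur : uniq (z :: q :: c :: t) by rewrite -E rot_uniq.
have cr : cycle (adj G) (z :: q :: c :: t) by rewrite -E rot_cycle.
have szr : 4 <= size (z :: q :: c :: t) by rewrite -E size_rot.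
have nq : next (z :: q :: c :: t) z = q by rewrite (next_mid (s1 := [::])).
have nz' : q \notin V by move: nz; rewrite -(next_rot i U) E nq.
have qN : q \in N by apply: (ha z) => //; rewrite -nq; apply: next_cycle cr _; rewrite inE eqxx.
case: t E Ur cr szr nq => [|d t] E Ur cr szr nq //.
set p := last d t.
have pz : adj G p z by have := cycle_last cr.
have pin : p \in d :: t by rewrite /p mem_last.
move: (Ur) => /= /andP[zn /andP[qn /andP[cn _]]].
have pq : p != q by apply/eqP => e; move: qn; rewrite -e in_cons pin orbT.
have pc : p != c by apply/eqP => e; move: cn; rewrite -e pin.
have pz' : p != z by apply/eqP => e; move: zn; rewrite -e 2!in_cons pin !orbT.
exists q, p; split.
- by rewrite !inE eqxx orbT.
- by rewrite 3!in_cons pin !orbT.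
- case: (boolP (p \in V)) => pV; first by rewrite adj_sym; apply: hb.
  apply: hc' => //; first by apply: (ha z) => //; rewrite adj_sym.
  by rewrite eq_sym.
- by rewrite (next_mid (s1 := [:: z])).
- have -> : next (z :: q :: c :: d :: t) p = z by exact: (next_last Ur).
  by apply/eqP => e; move: zn; rewrite e in_cons eqxx.
Qed.

End Basics.

Section Twin.
Variable T : finType.
Implicit Types (E F : {set {set T}}) (s : seq T).

Lemma uniq_neq (l1 l2 l3 : seq T) u w : uniq (l1 ++ u :: l2 ++ w :: l3) -> u != w.
Proof.
rewrite cat_uniq => /and3P[_ _] /= /andP[un _].
by apply: contraNneq un => ->; rewrite mem_cat inE eqxx orbT.
Qed.

Lemma cycle_path_cons (e : rel T) x p : cycle e (x :: p) -> path e x p.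
Proof. by rewrite /= rcons_path => /andP[]. Qed.

Lemma in_set2_or (x a b : T) : x \in [set a; b] -> x = a \/ x = b.
Proof. by rewrite !inE => /orP[]/eqP; [left|right]. Qed.

Lemma nc_of E s : ~ hc E s -> forall a b, a \in s -> b \in s -> adj E a b ->
  b = next s a \/ a = next s b.
Proof.
move=> nH a b ha hb ab; apply: NNPP => h; apply: nH; exists a, b; split => //.
- by apply/eqP => e; apply: h; left.
- by apply/eqP => e; apply: h; right.
Qed.

Lemma twin (A : {set T}) E F (V : {set T}) :
  minimal_triangulation A E F -> V \subset A ->
  (forall x y, x \in V -> y \in V -> x != y -> [set x; y] \in F) ->
  (forall x r, x \in V -> r \notin V -> [set x; r] \in E -> forall v, v \in V -> adj F v r) ->
  forall x r, x \in V -> r \notin V -> adj F x r -> forall v, v \in V -> adj F v r.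
Proof.
move=> [wfF sEF chF minF] sVA hcl hE.
pose allV r := [forall v in V, adj F v r].
have allVP : forall r, allV r -> forall v, v \in V -> adj F v r.
  by move=> r /forall_inP.
pose D := [set e in F | [exists x in V, exists r, [&& e == [set x; r], r \notin V & ~~ allV r]]].
pose G := F :\: D.
have memD : forall a b, [set a; b] \in D -> exists x r,
    [/\ x \in V, r \notin V, ~~ allV r, x \in [set a; b] & r \in [set a; b]].
  move=> a b; rewrite inE => /andP[_ /exists_inP[x xV /existsP[r /and3P[/eqP e rV ar]]]].
  by exists x, r; split => //; rewrite e !inE eqxx ?orbT.
have adjG : forall a b, adj G a b = adj F a b && ([set a; b] \notin D).
  by move=> a b; rewrite /adj /= in_setD; case: (a != b); case: ([set a; b] \in F); case: ([set a; b] \in D).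
have VV : forall a b, a \in V -> b \in V -> a != b -> adj G a b.
  move=> a b aV bV ab; rewrite adjG /adj /= ab hcl //=.
  apply/negP => /memD[x [r [_ rV _ _ /in_set2_or[] e]]]; by rewrite e ?aV ?bV in rV.
have VN : forall a b, a \in V -> b \notin V -> allV b -> adj G a b.
  move=> a b aV bV ab; rewrite adjG (allVP _ ab _ aV) /=.
  apply/negP => /memD[x [r [_ rV nr _ /in_set2_or[] e]]].
    by rewrite e aV in rV.
  by rewrite e ab in nr.
have OO : forall a b, a \notin V -> b \notin V -> adj F a b -> adj G a b.
  move=> a b aV bV ab; rewrite adjG ab /=.
  apply/negP => /memD[x [r [xV _ _ /in_set2_or[] e _]]].
    by rewrite e (negbTE aV) in xV.
  by rewrite e (negbTE bV) in xV.
have nbrN : forall a w, a \in V -> w \notin V -> adj G a w -> allV w.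
  move=> a w aV wV; rewrite adjG => /andP[/andP[aw aF] nD].
  apply: contraNT nD => nw; rewrite inE aF /=; apply/exists_inP; exists a => //.
  by apply/existsP; exists w; rewrite eqxx wV nw.
have GF : G \subset F by apply: subsetDl.
have EG : E \subset G.
  apply/subsetP => e eE; rewrite inE (subsetP sEF _ eE) andbT.
  apply/negP; rewrite inE => /andP[_ /exists_inP[x xV /existsP[r /and3P[/eqP ee rV nr]]]].
  move: nr; rewrite ee in eE; have := hE x r xV rV eE => h.
  by move/negP; apply; apply/forall_inP.
have chG : chordal A G.
  move=> s U sz sA cyc.
  have cycF : cycle (adj F) s by apply: sub_cycle cyc => a b; apply: adj_sub.
  have [x [y [xs ys xy nx ny]]] := chF s U sz sA cycF.
  case: (boolP ([set x; y] \in D)) => xyD; last first.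
    by exists x, y; split => //; rewrite adjG xy xyD.
  apply: NNPP => nH.
  have [x0 [r [x0V rV nr x0xy rxy]]] := memD _ _ xyD.
  have x0s : x0 \in s by case: (in_set2_or x0xy) => ->.
  have rs : r \in s by case: (in_set2_or rxy) => ->.
  have [i [c [d [t E0]]]] := rot3 x0s (leq_trans (isT : 3 <= 4) sz).
  have nH' : ~ hc G (x0 :: c :: d :: t) by rewrite -E0 => h; apply: nH; exact: hc_rot h.
  have Ur : uniq (x0 :: c :: d :: t) by rewrite -E0 rot_uniq.
  have cr : cycle (adj G) (x0 :: c :: d :: t) by rewrite -E0 rot_cycle.
  have szr : 4 <= size (x0 :: c :: d :: t) by rewrite -E0 size_rot.
  have sAr : {subset x0 :: c :: d :: t <= A} by move=> z; rewrite -E0 mem_rot; apply: sA.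
  have rr : r \in x0 :: c :: d :: t by rewrite -E0 mem_rot.
  case: t E0 nH' Ur cr szr sAr rr => [|e t] E0 nH' Ur cr szr sAr rr //.
  set t0 := x0 :: c :: d :: e :: t.
  have nc := nc_of nH'.
  set p := last e t.
  have pin : p \in e :: t by rewrite /p mem_last.
  move: (Ur) => /= /andP[x0n /andP[cn /andP[dn _]]].
  have pc : p != c by apply/eqP => ee; move: cn; rewrite -ee in_cons pin !orbT.
  have pd : p != d by apply/eqP => ee; move: dn; rewrite -ee pin.
  have px0 : p != x0 by apply/eqP => ee; move: x0n; rewrite -ee 2!in_cons pin !orbT.
  have cx0 : c != x0 by apply/eqP => ee; move: x0n; rewrite -ee in_cons eqxx.
  have nx0 : next t0 x0 = c by rewrite (next_mid (s1 := [::])).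
  have nc0 : next t0 c = d by rewrite (next_mid (s1 := [:: x0])).
  have np : next t0 p = x0 by exact: (next_last Ur).
  have x0c : adj G x0 c by rewrite -nx0; apply: next_cycle cr _; rewrite inE eqxx.
  have px : adj G p x0 by rewrite -np; apply: next_cycle cr _; rewrite /t0 3!in_cons pin !orbT.
  have pt0 : p \in t0 by rewrite /t0 3!in_cons pin !orbT.
  have ct0 : c \in t0 by rewrite /t0 !inE eqxx orbT.
  have cpV : ~~ ((c \in V) || (p \in V)).
    apply/negP => h.
    have cp : adj G c p.
      case: (boolP (c \in V)) => cV; case: (boolP (p \in V)) => pV.
      - by apply: VV => //; rewrite eq_sym.
      - by apply: VN => //; apply: (nbrN x0) => //; rewrite adj_sym.
      - by rewrite adj_sym; apply: VN => //; apply: (nbrN x0).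
      - by move: h; rewrite (negbTE cV) (negbTE pV).
    case: (nc _ _ ct0 pt0 cp) => ee.
      by move: pd; rewrite ee nc0 eqxx.
    by move: cx0; rewrite ee np eqxx.
  move: cpV; rewrite negb_or => /andP[cV pV].
  have allc : allV c by apply: (nbrN x0).
  have allp : allV p by apply: (nbrN x0) => //; rewrite adj_sym.
  have noV : forall w, w \in c :: d :: e :: t -> w \notin V.
    move=> w wP; apply/negP => wV.
    have wx0 : w != x0 by apply/eqP => ee; move: x0n; rewrite -ee wP.
    have wt0 : w \in t0 by rewrite /t0 in_cons wP orbT.
    have x0t0 : x0 \in t0 by rewrite /t0 in_cons eqxx.
    have x0w : x0 != w by rewrite eq_sym.
    case: (nc _ _ x0t0 wt0 (VV _ _ x0V wV x0w)) => ee.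
      by move: cV; rewrite -nx0 -ee wV.
    have : w = prev t0 x0 by rewrite ee (prev_next Ur).
    rewrite -np (prev_next Ur) => ee'; by move: pV; rewrite -ee' wV.
  have indP : induced F (c :: d :: e :: t).
    move=> s1 a s2 b s3 E1 s2n; apply/negP => ab.
    have aP : a \in c :: d :: e :: t by rewrite E1 mem_cat inE eqxx orbT.
    have bP : b \in c :: d :: e :: t by rewrite E1 mem_cat inE mem_cat inE eqxx !orbT.
    have abG := OO _ _ (noV _ aP) (noV _ bP) ab.
    have at0 : a \in t0 by rewrite /t0 in_cons aP orbT.
    have bt0 : b \in t0 by rewrite /t0 in_cons bP orbT.
    have Et0 : t0 = (x0 :: s1) ++ a :: s2 ++ b :: s3 by rewrite /t0 E1.
    have Ut : uniq ((x0 :: s1) ++ a :: s2 ++ b :: s3) by rewrite -Et0.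
    case: s2 s2n E1 Ut Et0 => // h s2 _ E1 Ut Et0.
    have a0 : a != x0 by apply/eqP => ee; move: x0n; rewrite -ee aP.
    case: (nc _ _ at0 bt0 abG) => ee.
      have na : next t0 a = h.
        rewrite Et0; apply: next_mid; exact: Ut.
      have hb : h != b.
        apply: (@uniq_neq (x0 :: s1 ++ [:: a]) s2 s3).
        by rewrite cat_cons -catA.
      by move: hb; rewrite ee na eqxx.
    case: s3 E1 Ut Et0 ee => [|h3 s3] E1 Ut Et0 ee.
      have nb : next t0 b = x0.
        rewrite Et0; have := next_last Ut.
        by rewrite last_cat /= last_cat /= => H; exact: H.
      by move: a0; rewrite ee nb eqxx.
    have nb : next t0 b = h3.
      have E2 : t0 = (x0 :: s1 ++ a :: h :: s2) ++ b :: h3 :: s3 by rewrite Et0 /= -catA.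
      by rewrite E2; apply: next_mid; rewrite -E2; exact: Ur.
    have : a != h3.
      apply: (@uniq_neq (x0 :: s1) (h :: s2 ++ [:: b]) s3).
      have E3 : t0 = (x0 :: s1) ++ a :: (h :: s2 ++ [:: b]) ++ h3 :: s3.
        by rewrite Et0 /= -catA.
      by rewrite -E3.
    by rewrite ee nb eqxx.
  have rP : r \in c :: d :: e :: t.
    move: rr; rewrite in_cons => /orP[/eqP rx0|//].
    by move: rV; rewrite rx0 x0V.
  move/forall_inPn: nr => [v' v'V nv'].
  have U' : uniq (v' :: c :: d :: e :: t).
    rewrite cons_uniq; apply/andP; split.
      by apply/negP => /noV; rewrite v'V.
    by move: Ur; rewrite /t0 cons_uniq => /andP[].
  have S' : {subset v' :: c :: d :: e :: t <= A}.
    move=> z; rewrite in_cons => /orP[/eqP ->|zP]; first exact: (subsetP sVA).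
    by apply: sAr; rewrite in_cons zP orbT.
  have pth : path (adj F) c (d :: e :: t).
    have h2 : path (adj G) x0 (c :: d :: e :: t).
      exact: cycle_path_cons cr.
    have h3 := sub_path (fun a b => @adj_sub _ G F a b GF) h2.
    by case/andP: h3.
  have vc : adj F v' c by apply: allVP.
  have vl : adj F v' (last c (d :: e :: t)) by apply: allVP.
  have := @fan T A F v' chF (size (d :: e :: t)) c (d :: e :: t) (leqnn _) U' S' pth indP vc vl r rP.
  by rewrite (negbTE nv').
have GeF : G = F := minF G EG GF chG.
move=> x r xV rV xr v vV.
case: (boolP (allV r)) => [h|nr]; first exact: allVP.
exfalso.
have xrD : [set x; r] \in D.
  rewrite inE; case/andP: xr => _ ->; apply/exists_inP; exists x => //.
  by apply/existsP; exists r; rewrite eqxx rV nr.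
move: xr => /andP[_]; rewrite -GeF in_setD xrD.
by [].
Qed.

End Twin.

Section Four.
Variable T : finType.

Lemma four_cycle (A : {set T}) F u1 u2 n1 n2 : chordal A F -> uniq [:: u1; n1; u2; n2] ->
  {subset [:: u1; n1; u2; n2] <= A} -> adj F u1 n1 -> adj F n1 u2 -> adj F u2 n2 ->
  adj F n2 u1 -> ~~ adj F u1 u2 -> adj F n1 n2.
Proof.
move=> ch U sA a1 a2 a3 a4 nu.
apply/negPn/negP => nn.
have cyc : cycle (adj F) [:: u1; n1; u2; n2] by rewrite /= a1 a2 a3 a4.
have [x [y [xs ys xy nx ny]]] := ch _ U isT sA cyc.
have e1 : next [:: u1; n1; u2; n2] u1 = n1 by rewrite (next_mid (s1 := [::])).
have e2 : next [:: u1; n1; u2; n2] n1 = u2 by rewrite (next_mid (s1 := [:: u1])).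
have e3 : next [:: u1; n1; u2; n2] u2 = n2 by rewrite (next_mid (s1 := [:: u1; n1])).
have e4 : next [:: u1; n1; u2; n2] n2 = u1 by exact: (next_last U).
have xy' := adj_neq xy.
move: xs ys nx ny xy xy'; rewrite !inE => /or4P[]/eqP-> /or4P[]/eqP-> nx ny xy xy';
  rewrite ?e1 ?e2 ?e3 ?e4 ?eqxx in nx ny xy'; try done;
  by move: nu nn; rewrite ?xy //; rewrite adj_sym in xy; rewrite xy.
Qed.

End Four.

Section Main.
Variable T : finType.
Implicit Types (E F : {set {set T}}).

Lemma set2_sub (a b : T) (V : {set T}) : ([set a; b] \subset V) = (a \in V) && (b \in V).
Proof. by rewrite subUset !sub1set. Qed.

Lemma main_abs (A : {set T}) E (V : {set T}) (EV : {set {set T}}) Om :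
  V \subset A -> wf_graph V EV ->
  (forall x y, x \in V -> y \in nbh A E V -> [set x; y] \in E) ->
  (forall e, e \in E -> e \subset V -> e \in EV) ->
  EV \subset E ->
  potential_maximal_clique A E Om -> Om :&: V != set0 -> ~~ (V \subset Om) ->
  potential_maximal_clique V EV (Om :&: V) /\ Om :\: V = nbh A E V.
Proof.
move=> sVA wfEV hmod hEV sEVE [F [[wfF sEF chF minF] [[sOmA Omcl] Ommax]]] OmV VOm.
set N := nbh A E V.
have NP : forall y, y \in N = [&& y \in A, y \notin V & [exists x in V, adj E x y]].
  by move=> y; rewrite inE in_setD andbA (andbC (y \notin V)).
have NnV : forall y, y \in N -> y \notin V by move=> y; rewrite NP => /and3P[].
have NA : forall y, y \in N -> y \in A by move=> y; rewrite NP => /and3P[].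
have eA : forall e, e \in F -> e \subset A by move=> e /wfF[].
have toN : forall x y, x \in V -> y \notin V -> [set x; y] \in E -> y \in N.
  move=> x y xV yV xyE; rewrite NP yV /=.
  have : [set x; y] \subset A by apply: eA; apply: (subsetP sEF).
  rewrite set2_sub => /andP[_ ->] /=.
  apply/exists_inP; exists x => //; rewrite /adj /= xyE andbT.
  by apply: contraNneq yV => <-.
have VNF : forall x y, x \in V -> y \in N -> adj F x y.
  move=> x y xV yN; rewrite /adj /= (subsetP sEF _ (hmod _ _ xV yN)) andbT.
  by apply: contraNneq (NnV _ yN) => <-.
case/set0Pn: OmV => u; rewrite inE => /andP[uOm uV].
case/subsetPn: VOm => v vV vOm.
have [u1 [u2 [u1V u2V u12 nu12]]] : exists u1 u2, [/\ u1 \in V, u2 \in V, u1 != u2 & [set u1; u2] \notin F].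
  apply: NNPP => hn.
  have hcl : forall x y, x \in V -> y \in V -> x != y -> [set x; y] \in F.
    move=> x y xV yV xy; apply: NNPP => h; apply: hn; exists x, y; split => //.
    by apply/negP.
  have hE : forall x r, x \in V -> r \notin V -> [set x; r] \in E -> forall w, w \in V -> adj F w r.
    by move=> x r xV rV xrE w wV; apply: VNF => //; apply: (toN x).
  have tw := twin (And4 wfF sEF chF minF) sVA hcl hE.
  have vy : forall y, y \in Om -> y != v -> [set v; y] \in F.
    move=> y yO yv; case: (boolP (y \in V)) => yV.
      by apply: hcl => //; rewrite eq_sym.
    have uy : u != y by apply: contraNneq yV => <-.
    have : adj F u y by rewrite /adj /= uy Omcl.
    by move/(tw _ _ uV yV)/(_ _ vV) => /andP[].
  have cl : is_clique A F (v |: Om).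
    split; first by rewrite subUset sub1set (subsetP sVA) // sOmA.
    move=> x y; rewrite !in_setU1 => /orP[/eqP->|xO] /orP[/eqP->|yO] xy.
    - by rewrite eqxx in xy.
    - by apply: vy; rewrite // eq_sym.
    - by rewrite setUC; apply: vy.
    - exact: Omcl.
  have := Ommax _ cl (subsetUr _ _) => e.
  by move: vOm; rewrite -e setU11.
have neqVN : forall x y, x \in V -> y \in N -> x != y.
  by move=> x y xV yN; apply: contraNneq (NnV _ yN) => <-.
have Ncl : forall n1 n2, n1 \in N -> n2 \in N -> n1 != n2 -> adj F n1 n2.
  move=> n1 n2 n1N n2N n12.
  apply: (four_cycle (u1 := u1) (u2 := u2) chF).
  - rewrite /= !inE !negb_or (neqVN _ _ u1V n1N) u12 (neqVN _ _ u1V n2N) /=.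
    by rewrite eq_sym (neqVN _ _ u2V n1N) n12 (neqVN _ _ u2V n2N).
  - move=> z; rewrite !inE => /or4P[]/eqP->; by [apply: (subsetP sVA)|apply: NA].
  - exact: VNF.
  - by rewrite adj_sym; apply: VNF.
  - exact: VNF.
  - by rewrite adj_sym; apply: VNF.
  - by rewrite /adj /= (negbTE nu12) andbF.
have noR : forall x y, x \in V -> y \notin V -> adj F x y -> y \in N.
  pose D2 := [set e in F | [exists x in V, exists r, [&& e == [set x; r], r \notin V & r \notin N]]].
  pose G := F :\: D2.
  have memD : forall a b, [set a; b] \in D2 -> exists x r,
      [/\ x \in V, r \notin V, r \notin N, x \in [set a; b] & r \in [set a; b]].
    move=> a b; rewrite inE => /andP[_ /exists_inP[x xV /existsP[r /and3P[/eqP e rV ar]]]].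
    by exists x, r; split => //; rewrite e !inE eqxx ?orbT.
  have inD : forall x y, x \in V -> y \notin V -> y \notin N -> adj F x y -> [set x; y] \in D2.
    move=> x y xV yV yN /andP[_ xyF]; rewrite inE xyF /=; apply/exists_inP; exists x => //.
    by apply/existsP; exists y; rewrite eqxx yV yN.
  have adjG : forall a b, adj G a b = adj F a b && ([set a; b] \notin D2).
    by move=> a b; rewrite /adj /= in_setD; case: (a != b); case: ([set a; b] \in F); case: ([set a; b] \in D2).
  have GF : G \subset F by apply: subsetDl.
  have EG : E \subset G.
    apply/subsetP => e eE; rewrite in_setD (subsetP sEF _ eE) andbT.
    apply/negP; rewrite inE => /andP[_ /exists_inP[x xV /existsP[r /and3P[/eqP ee rV nr]]]].
    by move: nr; rewrite (toN x r xV rV) // -ee.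
  have chG : chordal A G.
    apply: (glue (V := V) (N := N)).
    - move=> x y xV yV; rewrite adjG => /andP[xy nD].
      by apply: contraNT nD => yN; apply: inD.
    - move=> x y xV yN; rewrite adjG VNF //=.
      apply/negP => /memD[x' [r [_ rV rN _ /in_set2_or[] e]]].
        by rewrite e xV in rV.
      by rewrite e yN in rN.
    - move=> x y xN yN xy; rewrite adjG Ncl //=.
      apply/negP => /memD[x' [r [x'V _ _ /in_set2_or[] e _]]].
        by move: (NnV _ xN); rewrite -e x'V.
      by move: (NnV _ yN); rewrite -e x'V.
    - move=> s U sz sA cyc sV.
      have cycF : cycle (adj F) s by apply: sub_cycle cyc => a b; apply: adj_sub.
      have [x [y [xs ys xy nx ny]]] := chF s U sz sA cycF.
      exists x, y; split => //; rewrite adjG xy /=.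
      apply/negP => /memD[x' [r [_ rV _ _ /in_set2_or[] e]]].
        by rewrite e sV in rV.
      by rewrite e sV in rV.
    - move=> s U sz sA cyc sV.
      have cycF : cycle (adj F) s by apply: sub_cycle cyc => a b; apply: adj_sub.
      have [x [y [xs ys xy nx ny]]] := chF s U sz sA cycF.
      exists x, y; split => //; rewrite adjG xy /=.
      apply/negP => /memD[x' [r [x'V _ _ /in_set2_or[] e _]]].
        by move: (sV _ xs); rewrite -e x'V.
      by move: (sV _ ys); rewrite -e x'V.
  have GeF : G = F := minF G EG GF chG.
  move=> x y xV yV xy; apply: contraT => yN.
  have := inD _ _ xV yV yN xy.
  move: xy => /andP[_]; rewrite -GeF in_setD => /andP[nD _].
  by rewrite (negbTE nD).
have OmVN : forall w, w \in Om -> w \notin V -> w \in N.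
  move=> w wO wV; apply: (noR u) => //.
  have uw : u != w by apply: contraNneq wV => <-.
  by rewrite /adj /= uw Omcl.
have NOm : N \subset Om.
  have cl : is_clique A F (Om :|: N).
    split; first by rewrite subUset sOmA; apply/subsetP => y /NA.
    have h1 : forall x y, x \in Om -> y \in N -> x != y -> [set x; y] \in F.
      move=> x y xO yN xy; case: (boolP (x \in V)) => xV.
        by case/andP: (VNF _ _ xV yN).
      by case/andP: (Ncl _ _ (OmVN _ xO xV) yN xy).
    move=> x y; rewrite !in_setU => /orP[xO|xN] /orP[yO|yN] xy.
    - exact: Omcl.
    - exact: h1.
    - by rewrite setUC; apply: h1; rewrite // eq_sym.
    - by case/andP: (Ncl _ _ xN yN xy).
  have := Ommax _ cl (subsetUl _ _) => e.
  by rewrite -e subsetUr.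
have OmN : Om :\: V = N.
  apply/setP => y; rewrite in_setD.
  apply/idP/idP => [/andP[yV yO]|yN]; first exact: OmVN.
  by rewrite (NnV _ yN) (subsetP NOm).
split => //.
pose FV := [set e in F | e \subset V].
have FVF : FV \subset F by apply/subsetP => e; rewrite inE => /andP[].
have inFV : forall e, (e \in FV) = (e \in F) && (e \subset V) by move=> e; rewrite inE.
exists FV; split; last first.
  split.
    split; first exact: subsetIr.
    move=> x y; rewrite !inE => /andP[xO xV] /andP[yO yV] xy.
    by rewrite Omcl // set2_sub xV yV.
  move=> K [sKV Kcl] sOK.
  have cl : is_clique A F (K :|: N).
    split; first by rewrite subUset (subset_trans sKV sVA); apply/subsetP => y /NA.
    have h1 : forall x y, x \in K -> y \in N -> x != y -> [set x; y] \in F.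
      by move=> x y xK yN xy; case/andP: (VNF _ _ (subsetP sKV _ xK) yN).
    move=> x y; rewrite !in_setU => /orP[xK|xN] /orP[yK|yN] xy.
    - by have := Kcl _ _ xK yK xy; rewrite inFV => /andP[].
    - exact: h1.
    - by rewrite setUC; apply: h1; rewrite // eq_sym.
    - by case/andP: (Ncl _ _ xN yN xy).
  have OmKN : Om \subset K :|: N.
    apply/subsetP => w wO; rewrite in_setU; case: (boolP (w \in V)) => wV.
      by rewrite (subsetP sOK) // inE wO wV.
    by rewrite OmVN ?orbT.
  have e := Ommax _ cl OmKN.
  apply/eqP; rewrite eqEsubset sOK andbT; apply/subsetP => x xK.
  by rewrite inE -e in_setU xK /= (subsetP sKV).
split.
- by move=> e; rewrite inFV => /andP[/wfF[]].
- apply/subsetP => e eEV; rewrite inFV (subsetP sEF) ?(subsetP sEVE) //=.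
  by case: (wfEV _ eEV).
- move=> s U sz sV cyc.
  have cycF : cycle (adj F) s by apply: sub_cycle cyc => a b; apply: adj_sub.
  have sA : {subset s <= A} by move=> z /sV /(subsetP sVA).
  have [x [y [xs ys xy nx ny]]] := chF s U sz sA cycF.
  exists x, y; split => //; case/andP: xy => xy xyF.
  by rewrite /adj /= xy inFV xyF set2_sub !sV.
move=> F2 sEVF2 sF2FV chF2.
pose G := (F :\: FV) :|: F2.
have F2V : forall e, e \in F2 -> e \subset V.
  by move=> e /(subsetP sF2FV); rewrite inFV => /andP[].
have inGin : forall a b, a \in V -> b \in V -> adj G a b = adj F2 a b.
  move=> a b aV bV; rewrite /adj /= in_setU in_setD inFV set2_sub aV bV.
  by case: ([set a; b] \in F).
have inGout : forall a b, ~~ ((a \in V) && (b \in V)) -> adj G a b = adj F a b.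
  move=> a b nab; rewrite /adj /= in_setU in_setD inFV set2_sub (negbTE nab) andbF /=.
  case e2: ([set a; b] \in F2); last by rewrite orbF.
  by move: (F2V _ e2); rewrite set2_sub (negbTE nab).
have GF : G \subset F.
  by rewrite subUset subsetDl (subset_trans sF2FV FVF).
have EG : E \subset G.
  apply/subsetP => e eE; rewrite in_setU in_setD inFV (subsetP sEF _ eE) andbT /=.
  case: (boolP (e \subset V)) => eV //=.
  by rewrite (subsetP sEVF2) // hEV.
have chG : chordal A G.
  apply: (glue (V := V) (N := N)).
  - move=> x y xV yV; rewrite inGout ?(negbTE yV) ?andbF //; exact: noR.
  - move=> x y xV yN; rewrite inGout ?(negbTE (NnV _ yN)) ?andbF //; exact: VNF.
  - move=> x y xN yN xy; rewrite inGout ?(negbTE (NnV _ yN)) ?andbF //; exact: Ncl.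
  - move=> s U sz sA cyc sV.
    have cyc2 : cycle (adj F2) s.
      apply: (sub_in_cycle (P := mem V)) cyc.
        by move=> a b aV bV; rewrite inGin.
      by apply/allP => z /sV.
    have [x [y [xs ys xy nx ny]]] := chF2 s U sz sV cyc2.
    by exists x, y; split => //; rewrite inGin ?sV.
  - move=> s U sz sA cyc sV.
    have cycF : cycle (adj F) s by apply: sub_cycle cyc => a b; apply: adj_sub.
    have [x [y [xs ys xy nx ny]]] := chF s U sz sA cycF.
    by exists x, y; split => //; rewrite inGout // (negbTE (sV _ xs)).
have GeF : G = F := minF G EG GF chG.
apply/eqP; rewrite eqEsubset sF2FV /=; apply/subsetP => e eFV.
have : e \in G by rewrite GeF (subsetP FVF).
by rewrite in_setU in_setD eFV.
Qed.

End Main.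

Lemma same_part (k : nat) (T : finType) (V : 'I_k -> {set T})
  (hdisj : forall i j, i != j -> [disjoint V i & V j]) i j x :
  x \in V i -> x \in V j -> i = j.
Proof.
move=> xi xj; apply/eqP; apply: contraT => ij.
by rewrite (disjointFr (hdisj _ _ ij) xi) in xj.
Qed.

Theorem lemma7 (k : nat) (T : finType) (EG : {set {set 'I_k}})
  (V : 'I_k -> {set T}) (EM : 'I_k -> {set {set T}})
  (hG : wf_graph [set: 'I_k] EG)
  (hM : forall i, wf_graph (V i) (EM i))
  (hdisj : forall i j, i != j -> [disjoint V i & V j])
  (Om : {set T}) (i : 'I_k) :
  potential_maximal_clique (expansion_vertices V) (expansion_edges EG V EM) Om ->
  Om :&: V i != set0 ->
  ~~ (V i \subset Om) ->
  potential_maximal_clique (V i) (EM i) (Om :&: V i) /\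
  Om :\: V i = nbh (expansion_vertices V) (expansion_edges EG V EM) (V i).
Proof.
have sp := same_part hdisj.
have EMsub : forall j, EM j \subset expansion_edges EG V EM.
  move=> j; rewrite /expansion_edges; apply: subset_trans (subsetUl _ _).
  exact: (bigcup_sup j).
apply: main_abs => //.
- rewrite /expansion_vertices; exact: (bigcup_sup i).
- move=> x y xV; rewrite inE in_setD => /andP[/andP[yV _] /exists_inP[x' x'V]].
  case/andP => x'y; rewrite /expansion_edges in_setU => /orP[/bigcupP[j _ ej]|].
    have [_ /subsetP sj] := hM j _ ej.
    have x'j : x' \in V j by apply: sj; rewrite !inE eqxx.
    have yj : y \in V j by apply: sj; rewrite !inE eqxx orbT.
    by move: yV; rewrite (sp _ _ _ x'V x'j) yj.
  rewrite inE => /existsP[a /existsP[b /existsP[i' /existsP[j' /and4P[/eqP e ai bj ij]]]]].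
  rewrite /expansion_edges in_setU; apply/orP; right; rewrite inE.
  have x'ab : x' \in [set a; b] by rewrite -e !inE eqxx.
  have yab : y \in [set a; b] by rewrite -e !inE eqxx orbT.
  case: (in_set2_or x'ab) => ex'; case: (in_set2_or yab) => ey.
  + by move: x'y; rewrite ex' ey eqxx.
  + apply/existsP; exists x; apply/existsP; exists y; apply/existsP; exists i; apply/existsP; exists j'.
    rewrite eqxx xV ey bj /=; move: ij; rewrite (sp i' i a) // -ex' //.
  + apply/existsP; exists x; apply/existsP; exists y; apply/existsP; exists i; apply/existsP; exists i'.
    rewrite eqxx xV ey ai /=; move: ij; rewrite (sp j' i b) // -?ex' // setUC //.
  + by move: x'y; rewrite ex' ey eqxx.
- move=> e eE eV; move: eE; rewrite /expansion_edges in_setU => /orP[/bigcupP[j _ ej]|].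
    have [c2 /subsetP sj] := hM j _ ej.
    have : 0 < #|e| by rewrite c2.
    case/card_gt0P => x xe.
    by rewrite (sp _ _ _ (subsetP eV _ xe) (sj _ xe)).
  rewrite inE => /existsP[a /existsP[b /existsP[i' /existsP[j' /and4P[/eqP e' ai bj ij]]]]].
  have aV : a \in V i by apply: (subsetP eV); rewrite e' !inE eqxx.
  have bV : b \in V i by apply: (subsetP eV); rewrite e' !inE eqxx orbT.
  move: ij; rewrite (sp _ _ _ ai aV) (sp _ _ _ bj bV) setUid => /hG[].
  by rewrite cards1.
Qed.
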